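(* Let $H$ be the graph obtained from the complete bipartite graph $K_{4,4}$ by deleting a perfect matching. Then no bipartite graph $G=(A\cup B,E)$ containing $H$ as an induced subgraph admits a Stick representation with the vertices of $A$ as horizontal segments and those of $B$ as vertical segments. In particular, since $H$ is planar, not all planar bipartite graphs are Stick graphs.
   Context: A Stick representation of a bipartite graph $G=(A\cup B,E)$ (with $A$ horizontal and $B$ vertical) assigns to each vertex of $A$ a horizontal segment and to each vertex of $B$ a vertical segment such that the left endpoints of all horizontal segments and the bottom endpoints of all vertical segments lie on a fixed ground line $\ell$ of slope $-1$, and a horizontal and a vertical segment intersect if and only if the corresponding vertices are adjacent in $G$. A Stick graph is a bipartite graph admitting such a representation. *)

(* Defs.v *)
From HB Require Import structures.
From mathcomp Require Import all_boot all_order all_algebra.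
Set Implicit Arguments. Unset Strict Implicit. Unset Printing Implicit Defensive.
Import Order.TTheory GRing.Theory Num.Theory.
Local Open Scope ring_scope.

Definition on_ground (R : realFieldType) (c : R) (p : R * R) : Prop :=
  p.1 + p.2 = c.

Definition hseg (R : realFieldType) (x0 y0 len : R) (p : R * R) : Prop :=
  p.2 = y0 /\ x0 <= p.1 <= x0 + len.

Definition vseg (R : realFieldType) (x0 y0 ht : R) (p : R * R) : Prop :=
  p.1 = x0 /\ y0 <= p.2 <= y0 + ht.

Definition stick_rep (R : realFieldType) (A B : finType) (E : A -> B -> bool)
  (c : R) (la : A -> R * R) (lenA : A -> R) (lb : B -> R * R) (htB : B -> R)
  : Prop :=
  (forall a, on_ground c (la a) /\ 0 < lenA a) /\
  (forall b, on_ground c (lb b) /\ 0 < htB b) /\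
  (forall a b, E a b <->
     exists p : R * R, hseg (la a).1 (la a).2 (lenA a) p /\
                       vseg (lb b).1 (lb b).2 (htB b) p).

Definition stick_representable (R : realFieldType) (A B : finType)
  (E : A -> B -> bool) : Prop :=
  exists (c : R) la lenA lb htB, @stick_rep R A B E c la lenA lb htB.

Definition contains_induced_K44_minus_PM (A B : finType) (E : A -> B -> bool)
  : Prop :=
  exists (f : 'I_4 -> A) (g : 'I_4 -> B),
    injective f /\ injective g /\ (forall i j, E (f i) (g j) = (i != j)).

(* Main.v *)
Require Import Defs.
From mathcomp Require Import all_boot all_order all_algebra.
From mathcomp Require Import lra.
Import Order.TTheory GRing.Theory Num.Theory.
Local Open Scope ring_scope.

Lemma core_contra (R : realFieldType) (P Q L h : 'I_4 -> R) (i1 i4 j k : 'I_4) :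
  (forall i j, i != j -> [/\ P i <= Q j, Q j <= P i + L i & Q j <= P i + h j]) ->
  (forall i, P i <= Q i -> Q i <= P i + L i -> Q i <= P i + h i -> False) ->
  i1 != j -> i1 != k -> i4 != j -> i4 != k -> j != k ->
  P i1 <= P j -> P i1 <= P k -> P j <= P i4 -> P k <= P i4 -> False.
Proof.
move=> adj nadj h1j h1k h4j h4k hjk a b c d.
have [e1 _ e3] := adj _ _ h1j.
have [e4 _ _] := adj _ _ h4j.
have [f1 _ f3] := adj _ _ h1k.
have [f4 _ _] := adj _ _ h4k.
have [_ g2 _] := adj _ _ hjk.
have hkj : k != j by rewrite eq_sym.
have [_ g2' _] := adj _ _ hkj.
have Hj : ~ (Q j <= P j + L j) by move=> H; apply: (nadj j) => //; lra.
have Hk : ~ (Q k <= P k + L k) by move=> H; apply: (nadj k) => //; lra.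
move/negP: Hj; rewrite -ltNge => Hj.
move/negP: Hk; rewrite -ltNge => Hk.
lra.
Qed.

Ltac tryit Hm Hmax a b j k :=
  exists a, b, (@inord 3 j), (@inord 3 k);
  solve [ split; [ by split; rewrite -val_eqE /= ?inordK
                 | split; first [ apply: Hm | apply: Hmax; by rewrite -val_eqE /= ?inordK ] ] ].

Lemma exist4 (R : realFieldType) (p : 'I_4 -> R) :
  exists i1 i4 j k : 'I_4, [/\ i1 != j, i1 != k, i4 != j, i4 != k & j != k] /\
   [/\ p i1 <= p j, p i1 <= p k, p j <= p i4 & p k <= p i4].
Proof.
case: (@arg_minP _ R _ ord0 xpredT p) => // i1 _ Hmin.
have [i0 Hi0] : exists i0 : 'I_4, i0 != i1.
  by case: i1 {Hmin} => [[|n] Hn]; [exists (inord 1) | exists ord0]; rewrite -val_eqE /= ?inordK.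
case: (@arg_maxP _ R _ i0 (fun i => i != i1) p) => // i4 Hi4 Hmax.
have Hm := fun j => Hmin j isT.
move: i1 i4 Hi4 Hm Hmax {Hmin Hi0} => [[|[|[|[|?]]]] H1] // [[|[|[|[|?]]]] H4] //= Hi4 Hm Hmax;
 first [ tryit Hm Hmax (Ordinal H1) (Ordinal H4) 0%N 1%N | tryit Hm Hmax (Ordinal H1) (Ordinal H4) 0%N 2%N
       | tryit Hm Hmax (Ordinal H1) (Ordinal H4) 0%N 3%N | tryit Hm Hmax (Ordinal H1) (Ordinal H4) 1%N 2%N
       | tryit Hm Hmax (Ordinal H1) (Ordinal H4) 1%N 3%N | tryit Hm Hmax (Ordinal H1) (Ordinal H4) 2%N 3%N ].
Qed.

Theorem mainTheorem10 (R : realFieldType) (A B : finType) (E : A -> B -> bool) :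
  contains_induced_K44_minus_PM E -> ~ stick_representable R E.
Proof.
move=> [f [g [_ [_ HE]]]] [c [la [lenA [lb [htB [Ha [Hb Hst]]]]]]].
pose P i := (la (f i)).1; pose Q j := (lb (g j)).1.
pose L i := lenA (f i); pose h j := htB (g j).
have adj : forall i j, i != j -> [/\ P i <= Q j, Q j <= P i + L i & Q j <= P i + h j].
  move=> i j hij.
  have : E (f i) (g j) by rewrite HE.
  move/Hst => [[x y] [[/= e1 /andP [e2 e3]] [/= e4 /andP [e5 e6]]]].
  have [ga _] := Ha (f i); have [gb _] := Hb (g j).
  move: ga gb; rewrite /on_ground /P /Q /L /h => ga gb.
  split; lra.
have nadj : forall i, P i <= Q i -> Q i <= P i + L i -> Q i <= P i + h i -> False.
  move=> i e1 e2 e3.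
  have [ga _] := Ha (f i); have [gb _] := Hb (g i).
  move: ga gb e1 e2 e3; rewrite /on_ground /P /Q /L /h => ga gb e1 e2 e3.
  have : E (f i) (g i).
    apply/Hst; exists ((lb (g i)).1, (la (f i)).2); split; split => //=;
      apply/andP; split; lra.
  by rewrite HE eqxx.
have [i1 [i4 [j [k [[d1 d2 d3 d4 d5] [o1 o2 o3 o4]]]]]] := @exist4 R P.
exact: (@core_contra R P Q L h i1 i4 j k adj nadj d1 d2 d3 d4 d5 o1 o2 o3 o4).
Qed.
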